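(* Let $G=(\mathcal{V},\mathcal{E})$ be a directed graph on $n$ nodes, let $f\ge0$, and let $\mathbf{A}\in\mathbb{R}^{k\times n}$ be an assignment matrix. If for every $\mathcal{F}\subseteq\mathcal{V}$ with $|\mathcal{F}|\le f$, every reduced graph of $G$ with respect to $\mathcal{F}$ contains a source component with at least $\max\{f+1,sp(\mathbf{A})\}$ nodes, then $n\ge\max\{sp(\mathbf{A})+2f,\,3f+1\}$.
   Context: An assignment matrix $\mathbf{A}\in\mathbb{R}^{k\times n}$ has nonnegative entries with each column summing to $1$. Its sparsity parameter $sp(\mathbf{A})$ is the smallest integer $s$ such that the sum of any $s$ columns of $\mathbf{A}$ is component-wise positive ($sp(\mathbf{A})=n+1$ if the sum of all columns is not component-wise positive). The directed graph $G$ has no self-loops. Reduced graph: for a set $\mathcal{F}$ with $|\mathcal{F}|\le f$, a subgraph of $G$ obtained by removing all nodes in $\mathcal{F}$ together with their edges and then removing up to $f$ additional incoming edges at each remaining node. A source component of a directed graph is the set of its nodes each of which has a directed path to every other node of that graph. *)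

(* Defs.v *)
From mathcomp Require Import all_boot all_order all_algebra.
Set Implicit Arguments. Unset Strict Implicit. Unset Printing Implicit Defensive.
Import Order.TTheory GRing.Theory Num.Theory.
Local Open Scope ring_scope.

Definition assignment_matrix (R : realFieldType) (k n : nat) (A : 'M[R]_(k, n)) : Prop :=
  (forall i j, 0 <= A i j) /\ (forall j, \sum_(i < k) A i j = 1).

Definition sp_good (R : realFieldType) (k n : nat) (A : 'M[R]_(k, n)) (s : nat) : bool :=
  [forall S : {set 'I_n}, (#|S| == s)%N ==> [forall i : 'I_k, 0 < \sum_(j in S) A i j]].

(* sp(A): the smallest s in {0..n} with sp_good s, or n+1 if none exists
   (note: sp_good n fails iff the sum of all columns is not component-wise positive). *)
Definition sp (R : realFieldType) (k n : nat) (A : 'M[R]_(k, n)) : nat :=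
  find (sp_good A) (iota 0 n.+1).

(* h is a reduced graph of the directed graph e (edge x -> y iff e x y) w.r.t. F:
   nodes of F are removed with all their edges, and then at each remaining node
   at most f incoming edges are removed. The reduced graph has node set ~: F. *)
Definition reduced_graph (n : nat) (e : rel 'I_n) (f : nat) (F : {set 'I_n})
    (h : rel 'I_n) : Prop :=
  (forall x y, h x y -> [/\ x \notin F, y \notin F & e x y]) /\
  (forall y, y \notin F ->
     (#|[set x | (x \notin F) && e x y && ~~ h x y]| <= f)%N).

Definition source_component (n : nat) (F : {set 'I_n}) (h : rel 'I_n) : {set 'I_n} :=
  [set v | (v \notin F) && [forall w, (w \notin F) ==> connect h v w]].

(* Main.v *)
Require Import Defs.
From mathcomp Require Import all_boot all_order all_algebra.
From mathcomp Require Import zify.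
Import Order.TTheory GRing.Theory Num.Theory.
Local Open Scope ring_scope.

Lemma card_lt n b : (#|[set i : 'I_n | i < b]| = minn b n)%N.
Proof.
rewrite cardsE -sum1_card.
rewrite (big_mkcond (fun i : 'I_n => i < b)%N) /=.
rewrite -(big_mkord xpredT (fun i => if (i < b)%N then 1%N else 0%N)).
elim: n => [|n IH]; first by rewrite big_geq // minn0.
rewrite big_nat_recr //= IH; case: ltnP => H; lia.
Qed.

Theorem corollary1 (R : realFieldType) (n k f : nat) (e : rel 'I_n)
    (A : 'M[R]_(k, n)) :
  irreflexive e ->
  assignment_matrix A ->
  (forall (F : {set 'I_n}) (h : rel 'I_n),
     (#|F| <= f)%N -> reduced_graph e f F h ->
     (maxn f.+1 (sp A) <= #|source_component F h|)%N) ->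
  (maxn (sp A + 2 * f) (3 * f + 1) <= n)%N.
Proof.
move=> _ _ H.
set D := [set i : 'I_n | (i < 2 * f)%N].
set F := [set i : 'I_n | (i < f)%N].
have cD := card_lt n (2 * f)%N; have cF := card_lt n f.
rewrite -/D in cD; rewrite -/F in cF.
have FD : F \subset D by apply/subsetP => i; rewrite !inE; lia.
clearbody D F.
set h := fun x y : 'I_n => [&& e x y, x \notin D & y \notin F].
have Hred : reduced_graph e f F h.
  split.
    move=> x y /and3P [exy xD yF]; split => //.
    by apply: contra xD; apply/subsetP.
  move=> y yF.
  apply: (@leq_trans #|D :\: F|).
    apply: subset_leq_card; apply/subsetP => x; rewrite !inE /h yF.
    by case: (x \in D); case: (x \in F); case: (e x y).
  rewrite cardsD (setIidPr FD); lia.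
have := H F h _ Hred; rewrite cF => /(_ (geq_minl _ _)) Hs.
have sub : source_component F h \subset ~: D.
  apply/subsetP => v; rewrite !inE => /andP [vF /forallP Hv].
  apply/negP => vD.
  have onlyv : forall w, w \notin F -> w = v.
    move=> w wF; have := Hv w; rewrite wF /= => /connectP [p].
    case: p => [|x p] /=; first by move=> _ ->.
    by rewrite /h vD andbF.
  have : (#|source_component F h| <= 1)%N.
    rewrite -(cards1 v); apply: subset_leq_card; apply/subsetP => u.
    by rewrite !inE => /andP [uF _]; apply/eqP/onlyv.
  have : (0 < #|D|)%N by apply/card_gt0P; exists v.
  lia.
have Ec : (#|~: D| = n - minn (2 * f) n)%N.
  have := cardsC D; rewrite card_ord cD; lia.
have := leq_trans Hs (subset_leq_card sub); rewrite Ec.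
lia.
Qed.
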